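(* Let $f:\mathbb{F}_2^{\,n}\to\mathbb{R}$, let $s\ge 1$ and $d$ be integers, and let $H\le\mathbb{F}_2^{\,n}$ be a subspace of codimension $d$ drawn uniformly at random. Consider the $2^d$ cosets (buckets) of $H$, with bucket energies indexed so that $y_1\ge y_2\ge\dots\ge y_{2^d}$, and for each bucket $i$ let $y_i^*$ be the energy of the largest Fourier coefficient in that bucket, and $z_i=y_i-y_i^*$. Then $$\mathbb{E}_H\left[\sum_{i=1}^s z_i\right]\le\sqrt{\frac{2s}{2^d}}\,\|f\|_2^2.$$
   Context: $\hat f(\alpha)=\frac{1}{2^n}\sum_x f(x)(-1)^{\alpha\cdot x}$ and $\|f\|_2^2=\frac{1}{2^n}\sum_x f(x)^2=\sum_\alpha\hat f(\alpha)^2$. The energy of a Fourier coefficient is $\hat f(\alpha)^2$. For a coset $C=a+H$ of $H$, its energy is $y=\sum_{\beta\in C}\hat f(\beta)^2$ and $y^*=\max_{\beta\in C}\hat f(\beta)^2$. *)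

(* Defs.v *)
From mathcomp Require Import all_boot all_order all_algebra.
Set Implicit Arguments. Unset Strict Implicit. Unset Printing Implicit Defensive.
Import Order.TTheory GRing.Theory Num.Theory.
Local Open Scope ring_scope.

Section Fourier.
Variables (R : rcfType) (n : nat).
Notation V := 'rV['F_2]_n.

Definition dotF2 (alpha x : V) : 'F_2 := \sum_(i < n) alpha 0 i * x 0 i.

Definition chi (alpha x : V) : R := (-1) ^+ (nat_of_ord (dotF2 alpha x)).

Definition fhat (f : V -> R) (alpha : V) : R :=
  (2%:R ^+ n)^-1 * \sum_(x : V) f x * chi alpha x.

Definition norm2sq (f : V -> R) : R := (2%:R ^+ n)^-1 * \sum_(x : V) f x ^+ 2.

(* subspace of codimension d: dimension n - d, i.e. 2^(n-d) elements *)
Definition codim_subspace (d : nat) (H : {set V}) : bool :=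
  [&& 0 \in H, [forall c : 'F_2, forall u : V, forall v : V,
        (u \in H) ==> (v \in H) ==> (c *: u + v \in H)]
    & #|H| == (2 ^ (n - d))%N].

Definition coset (H : {set V}) (a : V) : {set V} := [set a + h | h in H].
Definition cosets (H : {set V}) : {set {set V}} := [set coset H a | a : V].

Definition energy (f : V -> R) (C : {set V}) : R := \sum_(b in C) fhat f b ^+ 2.
(* y^* = max_{beta in C} fhat(beta)^2 (energies are >= 0, so 0 is a neutral default) *)
Definition max_energy (f : V -> R) (C : {set V}) : R :=
  \big[Order.max/0]_(b in C) fhat f b ^+ 2.
Definition zval (f : V -> R) (C : {set V}) : R := energy f C - max_energy f C.

Definition expect_codim (d : nat) (X : {set V} -> R) : R :=
  (#|[set H : {set V} | codim_subspace d H]|%:R)^-1 *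
  \sum_(H : {set V} | codim_subspace d H) X H.

End Fourier.

(* Main.v *)
Require Import Defs.
From mathcomp Require Import all_boot all_order all_algebra ring lra zify.
Import Order.TTheory GRing.Theory Num.Theory.
Local Open Scope ring_scope.
Set Implicit Arguments. Unset Strict Implicit. Unset Printing Implicit Defensive.

Lemma F2cases (a : 'F_2) : a = 0 \/ a = 1.
Proof. case: a => [[|[|k]] Hk]; [left|right|]; try exact: val_inj. by []. Qed.
Lemma F2add (a : 'F_2) : a + a = 0.
Proof. by case: (F2cases a) => ->; apply/val_inj. Qed.
Lemma F2opp (a : 'F_2) : - a = a.
Proof. by apply/eqP; rewrite eq_sym -subr_eq0 opprK F2add. Qed.
Lemma sgnB (R : ringType) (a b : 'F_2) : (-1) ^+ (nat_of_ord (a - b)) = (-1) ^+ (nat_of_ord a) * (-1) ^+ (nat_of_ord b) :> R.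
Proof. case: (F2cases a) => ->; case: (F2cases b) => -> /=. 
all: rewrite ?expr0 ?expr1 ?mulr1 ?mul1r ?mulrNN ?mulr1 //.
Qed.
Lemma sgnD (R : ringType) (a b : 'F_2) : (-1) ^+ (nat_of_ord (a + b)) = (-1) ^+ (nat_of_ord a) * (-1) ^+ (nat_of_ord b) :> R.
Proof. by rewrite -{1}(F2opp b) sgnB. Qed.

Section Four.
Variables (R : rcfType) (n : nat).
Notation V := 'rV['F_2]_n.

Lemma dotBr (l x y : V) : dotF2 l (x - y) = dotF2 l x - dotF2 l y.
Proof. by rewrite /dotF2 -sumrB; apply: eq_bigr => i _; rewrite !mxE mulrBr. Qed.
Lemma dotDr (l x y : V) : dotF2 l (x + y) = dotF2 l x + dotF2 l y.
Proof. by rewrite /dotF2 -big_split; apply: eq_bigr => i _; rewrite !mxE mulrDr. Qed.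
Lemma dotZr (l x : V) c : dotF2 l (c *: x) = c * dotF2 l x.
Proof. by rewrite /dotF2 mulr_sumr; apply: eq_bigr => i _; rewrite !mxE mulrCA. Qed.
Lemma dotC (l x : V) : dotF2 l x = dotF2 x l.
Proof. by rewrite /dotF2; apply: eq_bigr => i _; rewrite mulrC. Qed.
Lemma dotDl (a b x : V) : dotF2 (a + b) x = dotF2 a x + dotF2 b x.
Proof. by rewrite dotC dotDr !(dotC x). Qed.
Lemma dot0r (l : V) : dotF2 l 0 = 0.
Proof. by rewrite /dotF2 big1 // => i _; rewrite mxE mulr0. Qed.
Lemma dot_delta (i : 'I_n) (z : V) : dotF2 (delta_mx 0 i) z = z 0 i.
Proof.
rewrite /dotF2 (bigD1 i) //= big1 ?addr0; first by rewrite mxE !eqxx mul1r.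
by move=> j /negbTE hj; rewrite mxE hj andbF mul0r.
Qed.

Lemma cardV : #|{: V}| = (2 ^ n)%N.
Proof. by rewrite card_mx card_Fp // mul1n. Qed.

Lemma chiB (a x y : V) : chi R a x * chi R a y = chi R a (x - y).
Proof. by rewrite /chi dotBr sgnB. Qed.
Lemma chiDl (a b z : V) : chi R (a + b) z = chi R a z * chi R b z.
Proof. by rewrite /chi dotDl sgnD. Qed.

Lemma nz_coord (z : V) : z != 0 -> exists i, z 0 i != 0.
Proof.
move=> hz; apply/existsP; apply: contraR hz => /existsPn h.
apply/eqP/matrixP => a j; rewrite (ord1 a) mxE; by apply/eqP/negPn/h.
Qed.

Lemma sum_chi (z : V) : \sum_(a : V) chi R a z = if z == 0 then (2 ^ n)%:R else 0.
Proof.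
case: eqP => [->|/eqP hz].
  rewrite (eq_bigr (fun=> 1)); last by move=> a _; rewrite /chi dot0r expr0.
  by rewrite sumr_const cardV.
have [i hi] := nz_coord hz.
have zi : z 0 i = 1 by case: (F2cases (z 0 i)) hi => // ->; rewrite eqxx.
set S := \sum_a _.
have : S = - S.
  rewrite {1}/S (reindex_inj (addrI (delta_mx 0 i))) /= -mulN1r mulr_sumr.
  apply: eq_bigr => a _; rewrite chiDl /chi dot_delta zi /=.
  by rewrite expr1.
move=> h; apply/eqP; rewrite -[S == 0](@mulrn_eq0 _ S 2) mulr2n.
by rewrite {1}h addNr.
Qed.

Lemma parseval (f : V -> R) : \sum_(b : V) fhat f b ^+ 2 = norm2sq f.
Proof.
rewrite /fhat /norm2sq.
set k := (2%:R ^+ n)^-1.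
have kn : k * (2 ^ n)%:R = 1.
  by rewrite /k natrX mulVf // expf_neq0 // pnatr_eq0.
rewrite (eq_bigr (fun b => k^+2 * \sum_x \sum_y f x * f y * (chi R b x * chi R b y))); last first.
  move=> b _; rewrite exprMn; congr (_ * _); rewrite expr2 big_distrlr /=.
  by apply: eq_bigr => x _; apply: eq_bigr => y _; rewrite mulrACA.
rewrite -mulr_sumr exchange_big /=.
under eq_bigr => x _ do rewrite exchange_big /=.
under eq_bigr => x _ do under eq_bigr => y _ do rewrite -mulr_sumr.
under eq_bigr => x _ do under eq_bigr => y _ do under eq_bigr => b _ do rewrite chiB.
under eq_bigr => x _ do under eq_bigr => y _ do rewrite sum_chi subr_eq0.
have hx : forall x : V, \sum_(y : V) f x * f y * (if x == y then (2 ^ n)%:R else 0) = f x * f x * (2 ^ n)%:R.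
  move=> x; rewrite (bigD1 x) //= eqxx big1 ?addr0 //.
  by move=> y hy; rewrite eq_sym (negbTE hy) mulr0.
under eq_bigr => x _ do rewrite hx.
rewrite !mulr_sumr; apply: eq_bigr => x _.
transitivity (k * f x ^+ 2 * (k * (2 ^ n)%:R)); first ring.
by rewrite kn mulr1.
Qed.
End Four.

Section CS.
Variable R : rcfType.

Lemma sum_const_pred (I : finType) (P : pred I) (c : R) :
  \sum_(j | P j) c = c * #|P|%:R.
Proof.
have -> : \sum_(j | P j) c = \sum_(j in P) c by apply: eq_bigl.
by rewrite sumr_const mulr_natr.
Qed.

Lemma cs_sqrt (I : finType) (P : pred I) (p : I -> R) :
  (forall i, P i -> 0 <= p i) ->
  \sum_(i | P i) Num.sqrt (p i) <= Num.sqrt (#|P|%:R * \sum_(i | P i) p i).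
Proof.
move=> hp.
set L := \sum_(i | P i) _.
have L0 : 0 <= L by apply: sumr_ge0 => i _; exact: sqrtr_ge0.
have hS : 0 <= \sum_(i | P i) p i by apply: sumr_ge0.
rewrite -(ger0_norm L0) -sqrtr_sqr ler_sqrt; last by apply: mulr_ge0.
have key : 2 * L ^+ 2 <= \sum_(i | P i) \sum_(j | P j) (p i + p j).
  rewrite expr2 /L big_distrlr /= mulr_sumr; apply: ler_sum => i Pi.
  rewrite mulr_sumr; apply: ler_sum => j Pj.
  have := hp i Pi; have := hp j Pj => hj hi.
  rewrite -{2}(sqr_sqrtr hi) -{2}(sqr_sqrtr hj).
  set u := Num.sqrt (p i); set v := Num.sqrt (p j).
  by have := sqr_ge0 (u - v); rewrite sqrrB => h; lra.
move: key.
under eq_bigr => i _ do rewrite big_split /= sum_const_pred.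
rewrite big_split /= -mulr_suml sum_const_pred => key.
lra.
Qed.
End CS.

Section L.
Variables (R : rcfType) (n : nat).
Notation V := 'rV['F_2]_n.

Lemma nth_sum (g : {set V} -> R) : g set0 = 0 -> (forall C, 0 <= g C) ->
  forall (l : seq {set V}) s, \sum_(i < s) g (nth set0 l i) <= \sum_(C <- l) g C.
Proof.
move=> g0 gp; elim=> [|x l IH] [|s].
- by rewrite big_ord0 big_nil.
- by rewrite big_nil big1 // => i _; rewrite nth_nil g0.
- by rewrite big_ord0; apply: sumr_ge0 => C _; apply: gp.
- rewrite big_ord_recl big_cons /=; apply: lerD => //; exact: IH.
Qed.

Section Sub.
Variables (d : nat) (H : {set V}).
Hypothesis hH : codim_subspace d H.

Lemma sub0 : (0 : V) \in H. Proof. by case/and3P: hH. Qed.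
Lemma subZD c u v : u \in H -> v \in H -> c *: u + v \in H.
Proof.
case/and3P: hH => _ /forallP hc _ hu hv.
by move/forallP/(_ u)/forallP/(_ v): (hc c); rewrite hu hv.
Qed.
Lemma subD u v : u \in H -> v \in H -> u + v \in H.
Proof. by move=> hu hv; have := subZD 1 hu hv; rewrite scale1r. Qed.
Lemma subN u : u \in H -> - u \in H.
Proof. by move=> hu; have := subZD (-1) hu sub0; rewrite addr0 scaleN1r. Qed.
Lemma subB u v : u \in H -> v \in H -> u - v \in H.
Proof. by move=> hu hv; apply: subD => //; apply: subN. Qed.

Lemma mem_coset a b : (b \in coset H a) = (b - a \in H).
Proof.
apply/imsetP/idP => [[h hh ->]|hb]; first by rewrite addrC addKr.
by exists (b - a) => //; rewrite addrC subrK.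
Qed.

Lemma coset_eq a C : (C \in cosets H) && (a \in C) = (C == coset H a).
Proof.
apply/andP/eqP => [[/imsetP [x _ ->] ha]|->].
  rewrite mem_coset in ha.
  apply/setP => y; rewrite !mem_coset; apply/idP/idP => hy.
    have := subB hy ha; by rewrite opprB addrA subrK.
  have := subD hy ha; by rewrite addrA subrK.
split; first by apply: imset_f.
by rewrite mem_coset subrr sub0.
Qed.
End Sub.
End L.

Section Count.
Variables (n d : nat).
Notation V := 'rV['F_2]_n.

Definition cnt (v : V) := #|[set H : {set V} | codim_subspace d H && (v \in H)]|.
Definition NN := #|[set H : {set V} | codim_subspace d H]|.

Lemma F2one (x : 'F_2) : x != 0 -> x = 1.
Proof. by case: (F2cases x) => // ->; rewrite eqxx. Qed.

Lemma exists_l (v w : V) : v != 0 -> w != 0 ->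
  exists l : V, dotF2 l v = 1 /\ dotF2 l w = 1.
Proof.
move=> /nz_coord [i /F2one vi] /nz_coord [j /F2one wj].
case: (F2cases (w 0 i)) => wi; last first.
  by exists (delta_mx 0 i); rewrite !dot_delta.
case: (F2cases (v 0 j)) => vj; last first.
  by exists (delta_mx 0 j); rewrite !dot_delta.
exists (delta_mx 0 i + delta_mx 0 j); rewrite !dotDl !dot_delta vi wj vj wi.
by rewrite addr0 add0r.
Qed.

Lemma vaddK (v : V) : v + v = 0.
Proof. by apply/matrixP => i j; rewrite !mxE F2add. Qed.

Lemma cnt_le (v w : V) : v != 0 -> w != 0 -> (cnt v <= cnt w)%N.
Proof.
move=> hv hw; have [l [lv lw]] := exists_l hv hw.
have [u [lu hu]] : exists u, dotF2 l u = 0 /\ u = v + w.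
  by exists (v + w); rewrite dotDr lv lw F2add.
pose phi (x : V) := x + dotF2 l x *: u.
have phiK : cancel phi phi.
  move=> x; rewrite /phi dotDr dotZr lu mulr0 addr0 -addrA -scalerDl F2add scale0r addr0.
  done.
have phiL : forall c x y, phi (c *: x + y) = c *: phi x + phi y.
  move=> c x y; rewrite /phi dotDr dotZr scalerDl scalerDr scalerA.
  by rewrite addrACA.
have phi0 : phi 0 = 0 by rewrite /phi dot0r scale0r addr0.
have phiv : phi v = w by rewrite /phi lv scale1r hu addrA vaddK add0r.
have phi_inj : injective phi := can_inj phiK.
pose Phi (X : {set V}) := phi @: X.
have PhiK : cancel Phi Phi.
  move=> X; rewrite /Phi -imset_comp.
  by rewrite (eq_imset _ phiK) imset_id.
rewrite /cnt -(card_imset _ (can_inj PhiK)).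
apply: subset_leq_card; apply/subsetP => Y /imsetP [H]; rewrite inE => /andP [hH vH] ->.
rewrite inE; apply/andP; split; last by rewrite /Phi -phiv imset_f.
apply/and3P; split.
- by rewrite /Phi -phi0 imset_f // (sub0 hH).
- apply/forallP => c; apply/forallP => x; apply/forallP => y; apply/implyP.
  move=> /imsetP [x' hx' ->]; apply/implyP => /imsetP [y' hy' ->].
  by rewrite -phiL imset_f // (subZD hH).
- by rewrite /Phi card_imset //; case/and3P: hH.
Qed.

End Count.

Section Count2.
Variables (n d : nat).
Notation V := 'rV['F_2]_n.
Hypothesis dn : (d <= n)%N.

Lemma cnt_bound (v : V) : v != 0 -> (cnt d v * 2 ^ d <= NN n d)%N.
Proof.
move=> hv.
have E1 : (\sum_(w : V | w != 0%R) cnt d w = \sum_(H : {set V} | codim_subspace d H) #|[set w : V | (w != 0%R) && (w \in H)]|)%N.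
  rewrite /cnt; under eq_bigr do rewrite -sum1_card.
  under [RHS]eq_bigr do rewrite -sum1_card.
  rewrite (exchange_big_dep (codim_subspace d)) /=; last by move=> w H _; rewrite inE => /andP[].
  apply: eq_bigr => H hH; apply: eq_bigl => w; rewrite !inE hH /=.
  done.
have E2 : forall H : {set V}, codim_subspace d H -> #|[set w : V | (w != 0%R) && (w \in H)]| = (2 ^ (n - d)).-1.
  move=> H hH; have h := cardsD1 0 H; rewrite (sub0 hH) in h.
  have hc : #|H| = (2 ^ (n - d))%N by case/and3P: hH => _ _ /eqP.
  rewrite hc in h; rewrite h add1n /=.
  by apply: eq_card => w; rewrite !inE.
have E3 : (\sum_(H : {set V} | codim_subspace d H) #|[set w : V | (w != 0%R) && (w \in H)]| = NN n d * (2 ^ (n - d)).-1)%N.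
  rewrite (eq_bigr (fun=> (2 ^ (n - d)).-1)) //.
  have -> : (\sum_(H : {set V} | codim_subspace d H) (2 ^ (n - d)).-1 = \sum_(H in [set H : {set V} | codim_subspace d H]) (2 ^ (n - d)).-1)%N.
    by apply: eq_bigl => H; rewrite inE.
  by rewrite sum_nat_const.
have E4 : (cnt d v * (2 ^ n).-1 <= \sum_(w : V | w != 0%R) cnt d w)%N.
  have -> : (cnt d v * (2 ^ n).-1 = \sum_(w in predC1 (0%R : V)) cnt d v)%N.
    by rewrite sum_nat_const cardC1 cardV mulnC.
  by apply: leq_sum => w hw; apply: cnt_le.
have E5 : (0 < (2 ^ n).-1)%N.
  by rewrite -cardV -(cardC1 (0%R : V)); apply/card_gt0P; exists v.
have E6 : (cnt d v <= NN n d)%N.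
  by apply: subset_leq_card; apply/subsetP => H; rewrite !inE => /andP[].
have E7 : (2 ^ n = 2 ^ (n - d) * 2 ^ d)%N by rewrite -expnD subnK.
have A1 : (1 <= 2 ^ (n - d))%N by rewrite expn_gt0.
have B1 : (1 <= 2 ^ d)%N by rewrite expn_gt0.
move: E4 E5 E6 A1 B1; rewrite E1 E3 E7.
move: (2 ^ (n - d))%N (2 ^ d)%N (cnt d v) (NN n d) => A B c N.
rewrite -!subn1 => h1 h2 h3 h4 h5.
nia.
Qed.
End Count2.

Section Z.
Variables (R : rcfType) (n : nat) (f : 'rV['F_2]_n -> R).
Notation V := 'rV['F_2]_n.
Let a (b : V) := fhat f b ^+ 2.
Lemma a_ge0 b : 0 <= a b. Proof. exact: sqr_ge0. Qed.

Definition PP (C : {set V}) : R := \sum_(x in C) \sum_(y in C | y != x) a x * a y.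

Lemma PP_ge0 C : 0 <= PP C.
Proof. apply: sumr_ge0 => x _; apply: sumr_ge0 => y _; apply: mulr_ge0; exact: a_ge0. Qed.

Lemma zval_le C : zval f C <= Num.sqrt (PP C).
Proof.
rewrite /zval /energy /max_energy -/a.
set y := \sum_(b in C) a b.
set m := \big[Order.max/0]_(b in C) a b.
have m0 : 0 <= m.
  apply: (big_ind (fun x => 0 <= x)) => //; last by move=> b _; exact: a_ge0.
  by move=> u v hu hv; rewrite le_max hu.
have am : forall b, b \in C -> a b <= m.
  by move=> b hb; rewrite /m (bigD1 b) //= le_max lexx.
have y0 : 0 <= y by apply: sumr_ge0 => b _; exact: a_ge0.
have my : m <= y.
  apply: (big_ind (fun x => x <= y)) => //; first by move=> u v hu hv; rewrite ge_max hu hv.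
  move=> b hb; rewrite /y (bigD1 b) //= lerDl; apply: sumr_ge0 => c _; exact: a_ge0.
have hS : \sum_(b in C) a b * a b <= m * y.
  rewrite /y mulr_sumr; apply: ler_sum => b hb; apply: ler_wpM2r; [exact: a_ge0|exact: am].
have hP : PP C = y * y - \sum_(b in C) a b * a b.
  rewrite /PP mulr_suml -sumrB; apply: eq_bigr => b hb.
  by rewrite /y mulr_sumr [in RHS](bigD1 b) //= [_ * _ + _]addrC addrK.
have z0 : 0 <= y - m by rewrite subr_ge0.
rewrite -(ger0_norm z0) -sqrtr_sqr ler_sqrt; last exact: PP_ge0.
rewrite hP; nra.
Qed.

Definition QQ (H : {set V}) : R :=
  \sum_(x : V) \sum_(y : V | (y != x) && (y - x \in H)) a x * a y.

Lemma QQ_ge0 H : 0 <= QQ H.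
Proof. apply: sumr_ge0 => x _; apply: sumr_ge0 => y _; apply: mulr_ge0; exact: a_ge0. Qed.

Lemma PP0 : PP set0 = 0.
Proof. by rewrite /PP big_pred0 // => x; rewrite inE. Qed.

Lemma cosets_PP d H : codim_subspace d H -> \sum_(C in cosets H) PP C = QQ H.
Proof.
move=> hH; rewrite /PP /QQ (exchange_big_dep xpredT) //=.
apply: eq_bigr => x _.
rewrite (big_pred1 (coset H x)); last by move=> C; rewrite /= (coset_eq hH).
by apply: eq_bigl => y; rewrite mem_coset andbC.
Qed.

Lemma X_le d s H (l : seq {set V}) : codim_subspace d H -> perm_eq l (enum (cosets H)) ->
  \sum_(i < s) zval f (nth set0 l i) <= Num.sqrt (s%:R * QQ H).
Proof.
move=> hH hl.
apply: (@le_trans _ _ (\sum_(i < s) Num.sqrt (PP (nth set0 l i)))).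
  by apply: ler_sum => i _; apply: zval_le.
have h : \sum_(i < s) Num.sqrt (PP (nth set0 l i)) <= Num.sqrt (s%:R * \sum_(i < s) PP (nth set0 l i)).
  have := @cs_sqrt R 'I_s xpredT (fun i : 'I_s => PP (nth set0 l i)) (fun i _ => PP_ge0 _).
  by rewrite card_ord.
apply: le_trans h _.
rewrite ler_sqrt; last by apply: mulr_ge0 => //; apply: QQ_ge0.
apply: ler_wpM2l => //.
rewrite -(cosets_PP hH).
apply: le_trans (nth_sum PP0 PP_ge0 l s) _.
by rewrite (perm_big _ hl) big_enum.
Qed.

Lemma sumQQ d : (d <= n)%N ->
  \sum_(H : {set V} | codim_subspace d H) QQ H <=
  (NN n d)%:R / 2%:R ^+ d * (\sum_(x : V) a x) ^+ 2.
Proof.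
move=> dn; set K := (NN n d)%:R / 2%:R ^+ d.
have K0 : 0 <= K by apply: divr_ge0; rewrite ?exprn_ge0 ?ler0n.
rewrite /QQ.
under eq_bigr => H _ do under eq_bigr => x _ do rewrite big_mkcondr /=.
rewrite exchange_big /=.
under eq_bigr => x _ do rewrite exchange_big /=.
apply: (@le_trans _ _ (\sum_(x : V) \sum_(y : V) a x * a y * K)); last first.
  rewrite expr2 big_distrlr /= mulr_sumr; apply: ler_sum => x _.
  rewrite mulr_sumr; apply: ler_sum => y _; by rewrite mulrC lexx.
apply: ler_sum => x _.
rewrite [X in _ <= X](bigID (fun y => y != x)) /= -[X in X <= _]addr0.
apply: lerD; last by apply: sumr_ge0 => y _; apply: mulr_ge0 => //; apply: mulr_ge0; exact: a_ge0.
apply: ler_sum => y hy.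
rewrite -big_mkcondr /= sum_const_pred.
apply: ler_wpM2l; first by apply: mulr_ge0; exact: a_ge0.
have hyx : y - x != 0 by rewrite subr_eq0.
have := cnt_bound dn hyx.
rewrite -(ler_nat R) natrM natrX -ler_pdivlMr; last by rewrite exprn_gt0.
suff -> : cnt d (y - x) = #|(fun H : {set V} => codim_subspace d H && (y - x \in H))| by [].
by rewrite /cnt; apply: eq_card => H; rewrite !inE.
Qed.
End Z.

Unset Implicit Arguments.
Set Strict Implicit.

Theorem lemma3p1 (R : rcfType) (n d s : nat) (f : 'rV['F_2]_n -> R)
    (ord : {set 'rV['F_2]_n} -> seq {set 'rV['F_2]_n}) :
  (1 <= s)%N -> (d <= n)%N ->
  (forall H, codim_subspace d H ->
     perm_eq (ord H) (enum (cosets H)) /\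
     sorted (fun A B => energy f B <= energy f A) (ord H)) ->
  expect_codim d (fun H => \sum_(i < s) zval f (nth set0 (ord H) i))
  <= Num.sqrt (2 * s%:R / 2%:R ^+ d) * norm2sq f.
Proof.
move=> s1 dn hord.
rewrite /expect_codim -parseval.
set A := \sum_b _.
have A0 : 0 <= A by apply: sumr_ge0 => b _; exact: sqr_ge0.
set N := #|_|.
have hN : N = NN n d by [].
have hX : \sum_(H | codim_subspace d H) \sum_(i < s) zval f (nth set0 (ord H) i)
   <= Num.sqrt (N%:R * \sum_(H | codim_subspace d H) (s%:R * QQ f H)).
  apply: (@le_trans _ _ (\sum_(H | codim_subspace d H) Num.sqrt (s%:R * QQ f H))).
    by apply: ler_sum => H hH; apply: X_le hH (proj1 (hord H hH)).
  have -> : N = #|@codim_subspace n d|.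
    by rewrite /N; apply: eq_card => H; rewrite !inE.
  by apply: cs_sqrt => H _; apply: mulr_ge0 => //; apply: QQ_ge0.
have hQ := sumQQ f dn.
rewrite -/A -hN in hQ.
set Z := Num.sqrt (2 * s%:R / 2%:R ^+ d).
have Z0 : 0 <= Z := sqrtr_ge0 _.
have [N0|Npos] := eqVneq N 0%N.
  by rewrite N0 invr0 mul0r; apply: mulr_ge0.
have NR : 0 < N%:R :> R by rewrite ltr0n lt0n.
apply: (@le_trans _ _ (N%:R^-1 * (N%:R * (Z * A)))); last by rewrite mulKf // gt_eqF.
apply: ler_wpM2l; first by rewrite invr_ge0 ler0n.
apply: le_trans hX _.
have Y0 : 0 <= N%:R * (Z * A) by rewrite mulr_ge0 ?ler0n ?mulr_ge0.
rewrite -(ger0_norm Y0) -sqrtr_sqr ler_sqrt; last by apply: sqr_ge0.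
rewrite !exprMn sqr_sqrtr; last by apply: divr_ge0; rewrite ?exprn_ge0 ?mulr_ge0 ?ler0n.
rewrite -mulr_sumr.
have h2 : 0 < 2%:R ^+ d :> R by rewrite exprn_gt0.
move: hQ h2; rewrite /Z.
set q := \sum_(H | _) QQ f H; set t := 2%:R ^+ d; set S := s%:R; set M := N%:R.
have S0 : 0 <= S by rewrite ler0n.
have M0 : 0 <= M by rewrite ler0n.
move=> hq ht.
have u0 : 0 <= t^-1 by rewrite invr_ge0 ltW.
have h1 := ler_wpM2l (mulr_ge0 M0 S0) hq.
have h3 : 0 <= M * S * (M * t^-1 * A ^+ 2).
  by rewrite !mulr_ge0 // sqr_ge0.
rewrite /= in h1 *.
move: h1 h3; rewrite !mulrA => h1 h3.
nra.
Qed.
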